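(* For every $n\ge3$ there exists an instance of the general public project problem with $n$ players (i.e., a choice of $c>0$ and cost shares $c_1,\dots,c_n>0$ with $\sum_ic_i=c$) for which the BC mechanism dominates the VCG mechanism.
   Context: General public project problem: $n$ players, decisions $D=\{0,1\}$, $\Theta_i=[0,c]$ with $c>0$, $v_i(d,\theta_i)=d(\theta_i-c_i)$ where $c_i>0$ and $\sum_ic_i=c$; efficient decision $f(\theta)=1$ iff $\sum_i\theta_i\ge c$. Player $i$'s utility is $v_i(f(\theta),\theta_i)+t_i(\theta)$. The VCG (Clarke) mechanism: $t_i^{VCG}(\theta)=\sum_{j\ne i}v_j(f(\theta),\theta_j)-\max_{d\in D}\sum_{j\ne i}v_j(d,\theta_j)$. The BC (Bailey–Cavallo) mechanism: $t_i^{BC}(\theta)=t_i^{VCG}(\theta)-S_i(\theta_{-i})/n$ where $S_i(\theta_{-i})=\max_{\theta_i'\in[0,c]}\sum_{k=1}^n t_k^{VCG}(\theta_i',\theta_{-i})$. $t'$ dominates $t$ if $t_i(\theta)\le t'_i(\theta)$ for all $\theta,i$, strictly for some $\theta,i$. *)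

(* Defs.v *)
From Stdlib Require Import Reals Lra Lia Arith Classical ClassicalDescription ClassicalEpsilon.
Open Scope R_scope.

(* Players are indexed 0..n-1; type profiles and cost shares are nat -> R
   (values at indices >= n are irrelevant). *)

Fixpoint sumR (n : nat) (g : nat -> R) : R :=
  match n with
  | O => 0
  | S m => sumR m g + g m
  end.

Definition sumR_ex (n i : nat) (g : nat -> R) : R :=
  sumR n (fun j => if Nat.eq_dec j i then 0 else g j).

(* Decisions D = {0,1}, encoded as bool (true = 1 = build). *)
Definition valuation (ci : R) (d : bool) (thi : R) : R :=
  if d then thi - ci else 0.

Definition eff_decision (n : nat) (c : R) (th : nat -> R) : bool :=
  if Rle_dec c (sumR n th) then true else false.

Definition t_VCG (n : nat) (c : R) (cs : nat -> R) (th : nat -> R) (i : nat) : R :=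
  sumR_ex n i (fun j => valuation (cs j) (eff_decision n c th) (th j))
  - Rmax (sumR_ex n i (fun j => valuation (cs j) false (th j)))
         (sumR_ex n i (fun j => valuation (cs j) true (th j))).

Definition upd (th : nat -> R) (i : nat) (x : R) : nat -> R :=
  fun k => if Nat.eq_dec k i then x else th k.

(* Least upper bound of a set of reals (0 if it does not exist).
   When the set has a maximum, this is that maximum. *)
Definition Rsup (E : R -> Prop) : R :=
  match excluded_middle_informative (exists l, is_lub E l) with
  | left h => proj1_sig (constructive_indefinite_description _ h)
  | right _ => 0
  end.

Definition S_BC (n : nat) (c : R) (cs : nat -> R) (th : nat -> R) (i : nat) : R :=
  Rsup (fun y => exists x, 0 <= x <= c /\
          y = sumR n (fun k => t_VCG n c cs (upd th i x) k)).

Definition t_BC (n : nat) (c : R) (cs : nat -> R) (th : nat -> R) (i : nat) : R :=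
  t_VCG n c cs th i - S_BC n c cs th i / INR n.

Definition in_types (n : nat) (c : R) (th : nat -> R) : Prop :=
  forall k, (k < n)%nat -> 0 <= th k <= c.

Definition dominates (n : nat) (c : R)
    (t' t : (nat -> R) -> nat -> R) : Prop :=
  (forall th i, in_types n c th -> (i < n)%nat -> t th i <= t' th i) /\
  (exists th i, in_types n c th /\ (i < n)%nat /\ t th i < t' th i).

(* Main.v *)
Require Import Defs.
From Stdlib Require Import Reals Lra Lia Classical ClassicalDescription ClassicalEpsilon.
Open Scope R_scope.

Lemma sumR_ext n f g : (forall k, (k < n)%nat -> f k = g k) -> sumR n f = sumR n g.
Proof. induction n; intros H; simpl; auto. rewrite IHn; [rewrite H; auto|]; intros; apply H; lia. Qed.

Lemma sumR_plus n f g : sumR n (fun k => f k + g k) = sumR n f + sumR n g.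
Proof. induction n; simpl; [lra|]. rewrite IHn; lra. Qed.

Lemma sumR_minus n f g : sumR n (fun k => f k - g k) = sumR n f - sumR n g.
Proof. induction n; simpl; [lra|]. rewrite IHn; lra. Qed.

Lemma sumR_const n v : sumR n (fun _ => v) = INR n * v.
Proof. induction n; simpl sumR; [simpl; lra|]. rewrite IHn, S_INR; lra. Qed.

Lemma sumR_ind n m v : (m < n)%nat -> sumR n (fun k => if Nat.eq_dec k m then v else 0) = v.
Proof.
  induction n; intros H; [lia|]. simpl.
  destruct (Nat.eq_dec n m).
  - subst. rewrite (sumR_ext _ _ (fun _ => 0)). rewrite sumR_const; lra.
    intros k Hk. destruct (Nat.eq_dec k m); [lia|auto].
  - rewrite IHn; [lra|lia].
Qed.

Lemma sumR_ex_eq n i g : (i < n)%nat -> sumR_ex n i g = sumR n g - g i.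
Proof.
  intros H. unfold sumR_ex.
  rewrite (sumR_ext n g (fun k => (if Nat.eq_dec k i then 0 else g k) + (if Nat.eq_dec k i then g i else 0))).
  rewrite sumR_plus, sumR_ind; auto; lra.
  intros k _. destruct (Nat.eq_dec k i); subst; lra.
Qed.

Lemma sumR_nonpos n g : (forall k, (k < n)%nat -> g k <= 0) -> sumR n g <= 0.
Proof. induction n; intros H; simpl; [lra|]. assert (g n <= 0) by (apply H; lia).
  assert (sumR n g <= 0) by (apply IHn; intros; apply H; lia). lra. Qed.

Lemma sumR_le_term n g j : (forall k, (k < n)%nat -> g k <= 0) -> (j < n)%nat -> sumR n g <= g j.
Proof.
  induction n; intros H Hj; [lia|]. simpl.
  destruct (Nat.eq_dec j n).
  - subst. assert (sumR n g <= 0) by (apply sumR_nonpos; intros; apply H; lia). lra.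
  - assert (g n <= 0) by (apply H; lia).
    assert (sumR n g <= g j) by (apply IHn; [intros; apply H; lia | lia]). lra.
Qed.

Lemma tVCG_nonpos n c cs th j : t_VCG n c cs th j <= 0.
Proof.
  unfold t_VCG. destruct (eff_decision n c th).
  - pose proof (Rmax_r (sumR_ex n j (fun j0 => valuation (cs j0) false (th j0)))
                       (sumR_ex n j (fun j0 => valuation (cs j0) true (th j0)))). lra.
  - pose proof (Rmax_l (sumR_ex n j (fun j0 => valuation (cs j0) false (th j0)))
                       (sumR_ex n j (fun j0 => valuation (cs j0) true (th j0)))). lra.
Qed.

Lemma tVCG_formula n c cs th j : (j < n)%nat -> sumR n cs = c ->
  t_VCG n c cs th j =
  (if Rle_dec c (sumR n th) then (sumR n th - c) - (th j - cs j) else 0)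
  - Rmax 0 ((sumR n th - c) - (th j - cs j)).
Proof.
  intros Hj Hc. unfold t_VCG, eff_decision, valuation.
  assert (E0 : sumR_ex n j (fun j0 : nat => 0) = 0).
  { rewrite sumR_ex_eq, sumR_const; auto; lra. }
  assert (E1 : sumR_ex n j (fun j0 : nat => th j0 - cs j0) = (sumR n th - c) - (th j - cs j)).
  { rewrite sumR_ex_eq, sumR_minus; auto; lra. }
  destruct (Rle_dec c (sumR n th)); cbv beta iota; rewrite ?E0, ?E1; auto.
Qed.

Lemma Rsup_le (E : R -> Prop) b : (exists y, E y) -> (forall y, E y -> y <= b) -> Rsup E <= b.
Proof.
  intros Hne Hb. unfold Rsup.
  destruct (excluded_middle_informative (exists l, is_lub E l)) as [h|h].
  - destruct (constructive_indefinite_description _ h) as [l Hl]. simpl. destruct Hl as [_ Hl].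
    apply Hl. intros y Hy; apply Hb; auto.
  - exfalso. apply h. destruct (completeness E) as [m Hm]; eauto.
    exists b. intros y Hy; apply Hb; auto.
Qed.

Theorem theorem5 :
  forall n : nat, (3 <= n)%nat ->
  exists (c : R) (cs : nat -> R),
    0 < c /\
    (forall i, (i < n)%nat -> 0 < cs i) /\
    sumR n cs = c /\
    dominates n c (t_BC n c cs) (t_VCG n c cs).
Proof.
  intros n Hn.
  assert (Hn3 : 3 <= INR n) by (replace 3 with (INR 3) by (simpl; lra); apply le_INR; auto).
  set (cs := fun k => if Nat.eq_dec k 1 then 3 else 1).
  assert (Hcs : sumR n cs = INR n + 2).
  { rewrite (sumR_ext n cs (fun k => 1 + (if Nat.eq_dec k 1 then 2 else 0))).
    rewrite sumR_plus, sumR_const, sumR_ind; [lra|lia].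
    intros k _; unfold cs; destruct (Nat.eq_dec k 1); lra. }
  exists (INR n + 2), cs. split; [lra|]. split.
  { intros i _; unfold cs; destruct (Nat.eq_dec i 1); lra. }
  split; [exact Hcs|]. split.
  - intros th i _ _. unfold t_BC.
    assert (S_BC n (INR n + 2) cs th i <= 0).
    { apply Rsup_le.
      - exists (sumR n (fun k => t_VCG n (INR n + 2) cs (upd th i 0) k)).
        exists 0; split; [lra|auto].
      - intros y [x [_ ->]]. apply sumR_nonpos; intros; apply tVCG_nonpos. }
    assert (0 < / INR n) by (apply Rinv_0_lt_compat; lra).
    unfold Rdiv. nra.
  - set (th := fun k => if Nat.eq_dec k 1 then 0 else if Nat.eq_dec k 2 then 3 else 1).
    exists th, 0%nat. split.
    { intros k _; unfold th; destruct (Nat.eq_dec k 1); [lra|]; destruct (Nat.eq_dec k 2); lra. }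
    split; [lia|]. unfold t_BC.
    assert (S_BC n (INR n + 2) cs th 0 <= -1).
    { apply Rsup_le.
      - exists (sumR n (fun k => t_VCG n (INR n + 2) cs (upd th 0 0) k)).
        exists 0; split; [lra|auto].
      - intros y [x [Hx ->]].
        assert (Hs : sumR n (upd th 0 x) = INR n + x).
        { rewrite (sumR_ext n _ (fun k => 1 + ((if Nat.eq_dec k 0 then x - 1 else 0)
             + ((if Nat.eq_dec k 1 then -1 else 0) + (if Nat.eq_dec k 2 then 2 else 0))))).
          rewrite !sumR_plus, sumR_const, !sumR_ind; try lia. lra.
          intros k _. unfold upd, th.
          destruct k as [|[|[|k]]]; simpl; lra. }
        assert (Hnp : forall k, (k < n)%nat -> t_VCG n (INR n + 2) cs (upd th 0 x) k <= 0)
          by (intros; apply tVCG_nonpos).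
        destruct (Rle_dec (INR n + 2) (INR n + x)).
        + eapply Rle_trans; [apply (sumR_le_term _ _ 0%nat Hnp); lia|].
          rewrite tVCG_formula by (auto; lia). rewrite Hs.
          destruct (Rle_dec (INR n + 2) (INR n + x)); [|lra].
          unfold upd, cs; simpl.
          rewrite Rmax_left; lra.
        + eapply Rle_trans; [apply (sumR_le_term _ _ 1%nat Hnp); lia|].
          rewrite tVCG_formula by (auto; lia). rewrite Hs.
          destruct (Rle_dec (INR n + 2) (INR n + x)); [lra|].
          unfold upd, cs, th; simpl.
          rewrite Rmax_right; lra. }
    assert (0 < / INR n) by (apply Rinv_0_lt_compat; lra).
    unfold Rdiv. nra.
Qed.
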